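(* Let $U,V\in\mathbb{R}^{n\times r}$ each have orthonormal columns, and let $\Gamma\in\mathbb{R}^r$ be the vector of principal angles between $\operatorname{range}U$ and $\operatorname{range}V$, i.e. $\cos(\Gamma)$ is the vector of singular values of $U^TV$. Then for every $Z\in\mathcal{S}^r_+$, $$\operatorname{dist}(VZV^T;\,U\mathcal{S}^r_+U^T)\le\sqrt2\,\|Z\|_F\,\|\sin(\Gamma)\|_2,$$ where $\sin(\Gamma)$ is taken entrywise.
   Context: $\mathcal{S}^r_+$ is the cone of real symmetric PSD $r\times r$ matrices; $U\mathcal{S}^r_+U^T=\{UWU^T:W\in\mathcal{S}^r_+\}$; $\operatorname{dist}(X;\mathcal{Q})=\inf_{Y\in\mathcal{Q}}\|X-Y\|_F$ with $\|\cdot\|_F$ the Frobenius norm. *)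

(* Defs.v *)
(* Real numbers are modelled by an arbitrary real closed
   field R : rcfType (the reals are one; the statement is purely algebraic). *)
From HB Require Import structures.
From mathcomp Require Import all_boot all_order all_algebra.
Set Implicit Arguments. Unset Strict Implicit. Unset Printing Implicit Defensive.
Import Order.TTheory GRing.Theory Num.Theory.
Local Open Scope ring_scope.

Definition frob (R : rcfType) (m n : nat) (A : 'M[R]_(m, n)) : R :=
  Num.sqrt (\sum_(i < m) \sum_(j < n) A i j ^+ 2).

Definition norm2 (R : rcfType) (r : nat) (v : 'rV[R]_r) : R :=
  Num.sqrt (\sum_(j < r) v 0 j ^+ 2).

Definition psd (R : rcfType) (r : nat) (W : 'M[R]_r) : Prop :=
  W^T = W /\ forall x : 'cV[R]_r, 0 <= (x^T *m W *m x) 0 0.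

Definition orthonormal_cols (R : rcfType) (n r : nat) (A : 'M[R]_(n, r)) : Prop :=
  A^T *m A = 1%:M.

Definition orth_mx (R : rcfType) (r : nat) (P : 'M[R]_r) : Prop :=
  P^T *m P = 1%:M.

Definition conj_psd_cone (R : rcfType) (n r : nat) (U : 'M[R]_(n, r))
  (Y : 'M[R]_n) : Prop :=
  exists W : 'M[R]_r, psd W /\ Y = U *m W *m U^T.

(* dist(X; Q) <= c, i.e. inf_{Y in Q} ||X - Y||_F <= c, unfolded:
   for every eps > 0 some Y in Q has ||X - Y||_F <= c + eps. *)
Definition dist_le (R : rcfType) (n : nat) (X : 'M[R]_n)
  (Q : 'M[R]_n -> Prop) (c : R) : Prop :=
  forall eps : R, 0 < eps -> exists Y, Q Y /\ frob (X - Y) <= c + eps.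

(* sin of a principal angle gamma in [0, pi/2] given its cosine c = cos gamma
   in [0,1]: sin(gamma) = sqrt(1 - c^2). *)
Definition sin_of_cos (R : rcfType) (c : R) : R := Num.sqrt (1 - c ^+ 2).

Definition sinGamma (R : rcfType) (r : nat) (s : 'rV[R]_r) : 'rV[R]_r :=
  \row_j sin_of_cos (s 0 j).

(* Main.v *)
Require Import Defs.
From HB Require Import structures.
From mathcomp Require Import all_boot all_order all_algebra.
From mathcomp Require Import ring lra.
Import Order.TTheory GRing.Theory Num.Theory.
Local Open Scope ring_scope.

Section H.
Variable R : rcfType.

Lemma trAAT {m k} (A : 'M[R]_(m,k)) : \tr (A *m A^T) = \sum_i \sum_j A i j ^+ 2.
Proof.
rewrite /mxtrace; apply: eq_bigr => i _; rewrite mxE; apply: eq_bigr => j _.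
by rewrite mxE expr2.
Qed.

Lemma trAAT_ge0 {m k} (A : 'M[R]_(m,k)) : 0 <= \tr (A *m A^T).
Proof. rewrite trAAT; apply: sumr_ge0 => i _; apply: sumr_ge0 => j _; exact: sqr_ge0. Qed.

Lemma rot {m k} (A : 'M[R]_(m,k)) (B : 'M[R]_(k,m)) : \tr (A *m B) = \tr (B *m A).
Proof. exact: mxtrace_mulC. Qed.

Lemma stepA n (X P : 'M[R]_n) : X^T = X -> P^T = P -> P *m P = P ->
  \tr ((X - P *m X *m P) *m (X - P *m X *m P)^T)
   <= 2 * \tr (X *m (1%:M - P) *m X).
Proof.
move=> hX hP hPP.
have hET : (X - P *m X *m P)^T = X - P *m X *m P.
  by rewrite linearB /= !trmx_mul hX hP mulmxA.
set G := (1%:M - P) *m X *m (1%:M - P).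
have hG : G^T = G by rewrite /G !trmx_mul linearB /= trmx1 hP hX mulmxA.
have h0 := trAAT_ge0 G.
rewrite hG in h0.
rewrite hET.
set a := \tr (X *m X).
set b := \tr (X *m X *m P).
set c := \tr (X *m P *m X *m P).
have e1 : \tr ((X - P *m X *m P) *m (X - P *m X *m P)) = a - c.
  rewrite mulmxBl !mulmxBr !raddfB /=.
  have -> : \tr (X *m (P *m X *m P)) = c by rewrite !mulmxA.
  have -> : \tr (P *m X *m P *m X) = c by rewrite -!mulmxA rot !mulmxA.
  have -> : \tr (P *m X *m P *m (P *m X *m P)) = c.
    rewrite !mulmxA -(mulmxA _ P P) hPP -!mulmxA rot !mulmxA.
    by rewrite -(mulmxA _ P P) hPP.
  rewrite /a; lra.
have e2 : \tr (X *m (1%:M - P) *m X) = a - b.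
  rewrite mulmxBr mulmx1 mulmxBl raddfB /= /a /b.
  by rewrite [\tr (X *m P *m X)]rot mulmxA.
have e3 : \tr (G *m G) = a - 2 * b + c.
  have hCC : (1%:M - P) *m (1%:M - P) = 1%:M - P.
    by rewrite mulmxBr mulmx1 mulmxBl mul1mx hPP subrr subr0.
  have -> : \tr (G *m G) = \tr (X *m (1%:M - P) *m X *m (1%:M - P)).
    rewrite /G !mulmxA -(mulmxA _ (1%:M - P) (1%:M - P)) hCC.
    by rewrite -!mulmxA rot !mulmxA -(mulmxA _ (1%:M - P) (1%:M - P)) hCC.
  rewrite !mulmxBr !mulmx1 !mulmxBl !raddfB /=.
  rewrite [\tr (X *m P *m X)]rot mulmxA -/b -/a -/c.
  lra.
rewrite e1 e2; rewrite e3 in h0; clearbody a b c.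
lra.
Qed.

Lemma le_sqr_sqrt (x : R) : x <= Num.sqrt x ^+ 2.
Proof.
case: (lerP 0 x) => hx; first by rewrite sqr_sqrtr.
by rewrite ler0_sqrtr ?expr0n /= ?ltW.
Qed.

Lemma tr_diag2 k (d : 'rV[R]_k) (B : 'M[R]_k) :
  \tr (diag_mx d *m diag_mx d *m B) = \sum_i d 0 i ^+ 2 * B i i.
Proof.
rewrite -mulmxA !mul_diag_mx /mxtrace; apply: eq_bigr => i _.
by rewrite !mxE mulrA expr2.
Qed.

Lemma diag_le k (M : 'M[R]_k) j : (M *m M^T) j j <= \tr (M *m M^T).
Proof.
rewrite /mxtrace (bigD1 j) //= lerDl; apply: sumr_ge0 => i _.
rewrite mxE; apply: sumr_ge0 => l _; rewrite mxE; by rewrite -expr2 sqr_ge0.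
Qed.

Lemma diag_ge0 k (M : 'M[R]_k) j : 0 <= (M *m M^T) j j.
Proof. rewrite mxE; apply: sumr_ge0 => l _; rewrite mxE; by rewrite -expr2 sqr_ge0. Qed.
End H.

Theorem corollaryC4 (R : rcfType) (n r : nat)
    (U V : 'M[R]_(n, r))
    (hU : orthonormal_cols U) (hV : orthonormal_cols V)
    (s : 'rV[R]_r) (P Q : 'M[R]_r)
    (hP : orth_mx P) (hQ : orth_mx Q)
    (hs : forall j, 0 <= s 0 j)
    (hsvd : U^T *m V = P *m diag_mx s *m Q^T)
    (Z : 'M[R]_r) (hZ : psd Z) :
  dist_le (V *m Z *m V^T) (conj_psd_cone U)
    (Num.sqrt 2 * frob Z * norm2 (sinGamma s)).
Proof.
move=> eps heps.
case: hZ => hZT hZp.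
set X := V *m Z *m V^T.
set Pi := U *m U^T.
have hXT : X^T = X by rewrite /X !trmx_mul trmxK hZT mulmxA.
have hPT : Pi^T = Pi by rewrite /Pi trmx_mul trmxK.
have hPP : Pi *m Pi = Pi by rewrite /Pi mulmxA -(mulmxA U) hU mulmx1.
exists (Pi *m X *m Pi); split.
  exists (U^T *m X *m U); split; last by rewrite /Pi !mulmxA.
  split; first by rewrite /X !trmx_mul !trmxK hZT !mulmxA.
  move=> x; have := hZp (V^T *m U *m x).
  by rewrite /X !trmx_mul !trmxK !mulmxA.
set T := \tr (Z *m Z^T).
set S := \sum_j sin_of_cos (s 0 j) ^+ 2.
have hT0 : 0 <= T by exact: trAAT_ge0.
have hS0 : 0 <= S by apply: sumr_ge0 => j _; exact: sqr_ge0.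
have hc : Num.sqrt 2 * frob Z * norm2 (sinGamma s) = Num.sqrt (2 * T * S).
  rewrite sqrtrM ?mulr_ge0 // sqrtrM // /frob /norm2 -trAAT -/T.
  congr (_ * _ * Num.sqrt _); rewrite /S; apply: eq_bigr => j _; by rewrite mxE.
suff hle : frob (X - Pi *m X *m Pi) <= Num.sqrt 2 * frob Z * norm2 (sinGamma s).
  lra.
rewrite hc /frob -trAAT ler_sqrt; last by rewrite !mulr_ge0.
apply: le_trans (@stepA _ _ X Pi hXT hPT hPP) _.
rewrite -mulrA ler_pM2l ?ltr0n //.
set K := V^T *m (1%:M - Pi) *m V.
have eB : \tr (X *m (1%:M - Pi) *m X) = \tr (Z *m K *m Z).
  rewrite /X /K !mulmxA -!mulmxA rot !mulmxA -(mulmxA _ V^T V) hV mulmx1.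
  by [].
rewrite eB.
set M := Q^T *m Z.
have hQQ : Q *m Q^T = 1%:M := mulmx1C hQ.
have hMT : M^T = Z *m Q by rewrite /M trmx_mul trmxK hZT.
have eT : \tr (M *m M^T) = T.
  by rewrite hMT /M -mulmxA rot mulmxA -(mulmxA _ Q) hQQ mulmx1 /T hZT.
have eK : K = 1%:M - Q *m (diag_mx s *m diag_mx s) *m Q^T.
  rewrite /K mulmxBr mulmx1 mulmxBl hV; congr (_ - _).
  have -> : V^T *m Pi *m V = (U^T *m V)^T *m (U^T *m V).
    by rewrite trmx_mul trmxK /Pi !mulmxA.
  rewrite hsvd !trmx_mul trmxK tr_diag_mx.
  rewrite [Q *m (diag_mx s *m P^T)]mulmxA !mulmxA -(mulmxA _ P^T P) hP mulmx1.
  by rewrite -(mulmxA _ (diag_mx s) (diag_mx s)).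
have eC : \tr (Z *m K *m Z) = \sum_j (1 - s 0 j ^+ 2) * (M *m M^T) j j.
  rewrite eK mulmxBr mulmx1 mulmxBl raddfB /=.
  have -> : \tr (Z *m Z) = \tr (M *m M^T).
    by rewrite eT /T hZT.
  have -> : \tr (Z *m (Q *m (diag_mx s *m diag_mx s) *m Q^T) *m Z)
      = \tr (diag_mx s *m diag_mx s *m (M *m M^T)).
    rewrite hMT /M !mulmxA -!mulmxA rot !mulmxA.
    rewrite -!mulmxA rot !mulmxA.
    by rewrite -!mulmxA.
  rewrite tr_diag2 {1}/mxtrace -sumrB; apply: eq_bigr => j _.
  by rewrite mulrBl mul1r.
rewrite eC (mulrC T) /S mulr_suml -eT.
apply: ler_sum => j _.
apply: le_trans (_ : sin_of_cos (s 0 j) ^+ 2 * (M *m M^T) j j <= _).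
  apply: ler_wpM2r; first exact: diag_ge0.
  exact: le_sqr_sqrt.
apply: ler_wpM2l; first exact: sqr_ge0.
exact: diag_le.
Qed.
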